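(* Let $K$ be a field of characteristic $p>0$ with $\dim_{K^p}K<\infty$, and let $(W_n)_{n\ge0}$ be a power tower on $K$. Then all degrees $[W_{n-1}:W_n]$ are finite and $$[K:W_1]\ \ge\ [W_1:W_2]\ \ge\ [W_2:W_3]\ \ge\ \cdots\ \ge\ 1 .$$
   Context: For a field $K$ of characteristic $p>0$ and $n\ge0$, $K^{p^n}=\{x^{p^n}:x\in K\}$. For subfields $A,B\subset K$, $A\cdot B$ denotes their composite. A power tower on $K$ is a sequence of subfields $W_0,W_1,W_2,\ldots$ of $K$ such that $W_j=W_i\cdot K^{p^j}$ for all $0\le j\le i$ (in particular $W_0=K$ and $K^{p^n}\subset W_n\subset W_{n-1}$). *)

(* Defs.v *)
From HB Require Import structures.
From mathcomp Require Import all_boot all_order all_algebra.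
Set Implicit Arguments. Unset Strict Implicit. Unset Printing Implicit Defensive.
Import GRing.Theory.
Local Open Scope ring_scope.

Definition is_subfield (K : fieldType) (S : K -> Prop) : Prop :=
  [/\ S 0, S 1,
      (forall x y, S x -> S y -> S (x - y)),
      (forall x y, S x -> S y -> S (x * y)) &
      (forall x, S x -> S x^-1)].

Definition Kpow (K : fieldType) (p n : nat) : K -> Prop :=
  fun x => exists y : K, x = y ^+ (p ^ n).

Definition composite (K : fieldType) (A B : K -> Prop) : K -> Prop :=
  fun x => forall S : K -> Prop, is_subfield S ->
    (forall a, A a -> S a) -> (forall b, B b -> S b) -> S x.

Definition power_tower (K : fieldType) (p : nat) (W : nat -> K -> Prop) : Prop :=
  (forall i, is_subfield (W i)) /\
  (forall i j, (j <= i)%N -> forall x, W j x <-> composite (W i) (Kpow p j) x).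

Definition has_degree (K : fieldType) (A B : K -> Prop) (d : nat) : Prop :=
  exists s : seq K, [/\ size s = d,
    (forall i, (i < d)%N -> A s`_i),
    (forall c : seq K, size c = d -> (forall i, (i < d)%N -> B c`_i) ->
        \sum_(i < d) c`_i * s`_i = 0 -> forall i, (i < d)%N -> c`_i = 0) &
    (forall a, A a -> exists c : seq K, [/\ size c = d,
        (forall i, (i < d)%N -> B c`_i) & a = \sum_(i < d) c`_i * s`_i])].

Definition finite_degree (K : fieldType) (A B : K -> Prop) : Prop :=
  exists d, has_degree A B d.

(* Main.v *)
Require Import Defs.
From HB Require Import structures.
From mathcomp Require Import all_boot all_order all_algebra.
From mathcomp Require Import ring zify.
From Stdlib Require Import Classical.
Set Implicit Arguments. Unset Strict Implicit. Unset Printing Implicit Defensive.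
Import GRing.Theory.
Local Open Scope ring_scope.
Section LinAlg.
Variable K : fieldType.
Variable B : K -> Prop.
Hypothesis hB : is_subfield B.

Lemma sf0 : B 0. Proof. by case: hB. Qed.
Lemma sf1 : B 1. Proof. by case: hB. Qed.
Lemma sfB x y : B x -> B y -> B (x - y). Proof. by case: hB => _ _ h _ _; apply: h. Qed.
Lemma sfM x y : B x -> B y -> B (x * y). Proof. by case: hB => _ _ _ h _; apply: h. Qed.
Lemma sfV x : B x -> B x^-1. Proof. by case: hB => _ _ _ _ h; apply: h. Qed.
Lemma sfN x : B x -> B (- x). Proof. by move=> h; rewrite -sub0r; apply: sfB => //; apply: sf0. Qed.
Lemma sfD x y : B x -> B y -> B (x + y).
Proof. by move=> h1 h2; rewrite -[y]opprK; apply: sfB => //; apply: sfN. Qed.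
Lemma sfsum n (F : 'I_n -> K) : (forall i, B (F i)) -> B (\sum_(i < n) F i).
Proof. move=> h; apply: big_ind => //; [exact: sf0 | exact: sfD]. Qed.
Lemma sfX x n : B x -> B (x ^+ n).
Proof. move=> h; elim: n => [|n IH]; [rewrite expr0; exact: sf1 | rewrite exprS; exact: sfM]. Qed.

Definition indep (s : nat -> K) k := forall c : nat -> K,
  (forall i, (i < k)%N -> B (c i)) -> \sum_(i < k) c i * s i = 0 ->
  forall i, (i < k)%N -> c i = 0.

Lemma bump_lt (k j m : nat) : (j < m)%N -> (bump k j < m.+1)%N.
Proof. by move=> h; rewrite /bump; case: (k <= j)%N => /=; [rewrite add1n ltnS | rewrite add0n ltnS ltnW]. Qed.

Lemma unbump_lt (k i m : nat) : (k < m.+1)%N -> (i < m.+1)%N -> i != k -> (unbump k i < m)%N.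
Proof. move=> hk hi /eqP hik; rewrite /unbump; case: (ltnP k i) => /= hh; lia. Qed.

Lemma sumS n (F : nat -> K) : \sum_(i < n.+1) F i = F 0%N + \sum_(i < n) F i.+1.
Proof. by rewrite big_ord_recl. Qed.

Lemma steinitz n : forall (u : nat -> K) m (t : nat -> K) (C : nat -> nat -> K),
  (n < m)%N -> (forall j i, (j < m)%N -> (i < n)%N -> B (C j i)) ->
  (forall j, (j < m)%N -> t j = \sum_(i < n) C j i * u i) -> ~ indep t m.
Proof.
elim: n => [|n IH] u m t C ltnm hC ht hind.
  have h0 : \sum_(i < m) (fun _ => 1) i * t i = 0.
    by rewrite big1 // => i _; rewrite ht // big_ord0 mulr0.
  by move: (hind (fun _ => 1) (fun _ _ => sf1) h0 0%N ltnm); apply/eqP; rewrite oner_eq0.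
case: (boolP [exists j : 'I_m, C j 0%N != 0]) => [/existsP [k hk] | hall].
  case: m k hk ltnm hC ht hind => [|m] k; first by case: k.
  move=> hk ltnm hC ht hind.
  set a := C k 0%N.
  pose t' j := t (bump k j) - C (bump k j) 0%N / a * t k.
  pose C' j i := C (bump k j) i.+1 - C (bump k j) 0%N / a * C k i.+1.
  apply: (IH (fun i => u i.+1) m t' C') => //.
  - move=> j i hj hi; rewrite /C'; apply: sfB; first by apply: hC; [exact: bump_lt | by []].
    apply: sfM; [apply: sfM; [apply: hC => //; exact: bump_lt | apply: sfV; exact: hC] | exact: hC].
  - move=> j hj; rewrite /t' /C' !ht //; last exact: bump_lt.
    rewrite (sumS _ (fun i => C (bump k j) i * u i)) (sumS _ (fun i => C k i * u i)).
    under [RHS]eq_bigr => i _ do rewrite mulrBl -(mulrA (C (bump k j) 0%N / a)).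
    rewrite sumrB -mulr_sumr.
    rewrite mulrDr mulrA divfK //; ring.
  move=> c' hc' hs.
  pose c j := if j == nat_of_ord k then - \sum_(l < m) c' l * (C (bump k l) 0%N / a)
              else c' (unbump k j).
  have hcB : forall i, (i < m.+1)%N -> B (c i).
    move=> i hi; rewrite /c; case: eqP => hik.
      apply: sfN; apply: sfsum => l; apply: sfM; first by apply: hc'.
      apply: sfM; [apply: hC => //; exact: bump_lt | apply: sfV; exact: hC].
    apply: hc'; apply: (unbump_lt (ltn_ord k) hi); by apply/eqP.
  have hcl : forall i, c (bump k i) = c' i.
    move=> i; rewrite /c; have /negbTE -> : bump k i != k by rewrite eq_sym neq_bump.
    by rewrite bumpK.
  have hcsum : \sum_(j < m.+1) c j * t j = 0.
    rewrite (bigD1_ord k) //=.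
    under eq_bigr => i _ do rewrite hcl.
    rewrite /c eqxx.
    have E : \sum_(i < m) c' i * t' i = \sum_(i < m) (c' i * t (bump k i) - c' i * (C (bump k i) 0%N / a) * t k).
      by apply: eq_bigr => i _; rewrite /t' mulrBr !mulrA.
    rewrite E in hs.
    rewrite sumrB -mulr_suml in hs.
    by rewrite mulNr addrC.
  move=> i hi; rewrite -hcl; apply: (hind c hcB hcsum); exact: bump_lt.
have h0 : forall j, (j < m)%N -> C j 0%N = 0.
  move=> j hj; move/existsPn: hall => /(_ (Ordinal hj)) /=.
  by rewrite negbK => /eqP.
apply: (IH (fun i => u i.+1) m t (fun j i => C j i.+1)) => //.
- exact: ltnW.
- by move=> j i hj hi; apply: hC.
- move=> j hj; rewrite ht // (sumS _ (fun i => C j i * u i)) h0 // mul0r add0r.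
  done.
Qed.

Definition lspan (g : nat -> K) N x := exists c : nat -> K,
  (forall i, (i < N)%N -> B (c i)) /\ x = \sum_(i < N) c i * g i.



Lemma choice_fin m (P : nat -> (nat -> K) -> Prop) :
  (forall j, (j < m)%N -> exists c, P j c) ->
  exists C : nat -> nat -> K, forall j, (j < m)%N -> P j (C j).
Proof.
elim: m => [|m IH] h; first by exists (fun _ _ => 0).
have [C hC] : exists C : nat -> nat -> K, forall j, (j < m)%N -> P j (C j).
  by apply: IH => j hj; apply: h; apply: ltnW.
have [c hc] := h m (ltnSn m).
exists (fun j => if j == m then c else C j) => j hj.
case: eqP => [->//|hjm]; apply: hC.
by rewrite ltn_neqAle; apply/andP; split; [apply/eqP | rewrite -ltnS].
Qed.

Lemma L_bound (A : K -> Prop) g N (s : nat -> K) k :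
  (forall i, (i < k)%N -> A (s i)) -> indep s k ->
  (forall a, A a -> lspan g N a) -> (k <= N)%N.
Proof.
move=> hA hi hsp; case: (leqP k N) => // hNk.
have [C hC] := @choice_fin k (fun j c => (forall i, (i < N)%N -> B (c i)) /\ s j = \sum_(i < N) c i * g i)
  (fun j hj => hsp _ (hA j hj)).
exfalso; apply: (steinitz (u := g) (t := s) (C := C) hNk) => //.
- by move=> j i hj hi'; case: (hC j hj) => h _; apply: h.
- by move=> j hj; case: (hC j hj).
Qed.

Lemma L_max (A : K -> Prop) g N : (forall a, A a -> lspan g N a) ->
  exists k (s : nat -> K), [/\ (forall i, (i < k)%N -> A (s i)), indep s k &
     forall a, A a -> lspan s k a].
Proof.
move=> hsp.
pose P k := exists s : nat -> K, (forall i, (i < k)%N -> A (s i)) /\ indep s k.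
have [k [[s [hsA hsi]] hmax]] : exists k, P k /\ ~ P k.+1.
  apply: NNPP => hn.
  have hs : forall k, P k -> P k.+1.
    move=> k hk; apply: NNPP => hk1; apply: hn; by exists k.
  have : P N.+1.
    elim: N.+1 => [|n IH]; last exact: hs.
    exists (fun _ => 0); split => // c _ _ i; by rewrite ltn0.
  move=> [s [hA hi]]; have := L_bound hA hi hsp; by rewrite ltnn.
exists k, s; split => // a ha.
pose s' i := if i == k then a else s i.
have hs'A : forall i, (i < k.+1)%N -> A (s' i).
  move=> i hi; rewrite /s'; case: eqP => // hik; apply: hsA.
  by rewrite ltn_neqAle; apply/andP; split; [apply/eqP | rewrite -ltnS].
have hni : ~ indep s' k.+1 by move=> hi; apply: hmax; exists s'.
have [c hc] : exists c : nat -> K, ~ ((forall i, (i < k.+1)%N -> B (c i)) ->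
    \sum_(i < k.+1) c i * s' i = 0 -> forall i, (i < k.+1)%N -> c i = 0).
  by apply: not_all_ex_not.
have [hcB hsum hnz] : [/\ (forall i, (i < k.+1)%N -> B (c i)),
    \sum_(i < k.+1) c i * s' i = 0 & ~ forall i, (i < k.+1)%N -> c i = 0].
  split.
  - apply: NNPP => h; apply: hc => hX; by case: (h hX).
  - apply: NNPP => h; apply: hc => _ hY; by case: (h hY).
  - move=> hW; apply: hc => _ _; exact: hW.
rewrite big_ord_recr /= /s' eqxx in hsum.
have E : \sum_(i < k) c (widen_ord (leqnSn k) i) * s' (widen_ord (leqnSn k) i)
      = \sum_(i < k) c i * s i.
  apply: eq_bigr => i _ /=; rewrite /s'.
  by have /negbTE -> : (nat_of_ord i != k) by rewrite ltn_eqF.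
rewrite /s' in E; rewrite E in hsum.
have hck : c k != 0.
  apply/eqP => hck; apply: hnz => i hi.
  have hi0 : \sum_(i < k) c i * s i = 0 by move: hsum; rewrite hck mul0r addr0.
  case: (ltnP i k) => hik; first exact: (hsi c (fun j hj => hcB j (ltnW hj)) hi0).
  have -> : i = k by apply/eqP; rewrite eqn_leq -ltnS hi hik.
  exact: hck.
exists (fun i => - (c i / c k)); split.
  by move=> i hi; apply: sfN; apply: sfM; [apply: hcB; apply: ltnW | apply: sfV; apply: hcB].
under eq_bigr => i _ do rewrite mulNr (mulrC (c i)) -mulrA.
rewrite sumrN -mulr_sumr.
move/eqP: hsum; rewrite addr_eq0 => /eqP ->.
by rewrite mulrN opprK mulKf.
Qed.

Lemma deg_of_fun (A : K -> Prop) k (s : nat -> K) :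
  (forall i, (i < k)%N -> A (s i)) -> indep s k -> (forall a, A a -> lspan s k a) ->
  has_degree A B k.
Proof.
move=> hA hi hsp; exists (mkseq s k); split.
- by rewrite size_mkseq.
- by move=> i hik; rewrite nth_mkseq //; apply: hA.
- move=> c _ hc hsum i hik; apply: (hi (fun j => c`_j)) => //.
  by apply: (etrans _ hsum); apply: eq_bigr => j _; rewrite nth_mkseq.
- move=> a ha; have [d [hd ->]] := hsp a ha; exists (mkseq d k); split.
  + by rewrite size_mkseq.
  + by move=> i hik; rewrite nth_mkseq //; apply: hd.
  + by apply: eq_bigr => j _; rewrite !nth_mkseq.
Qed.

Lemma fun_of_deg (A : K -> Prop) k : has_degree A B k ->
  exists s : nat -> K, [/\ (forall i, (i < k)%N -> A (s i)), indep s k &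
     (forall a, A a -> lspan s k a)].
Proof.
move=> [s0 [hsz hA hi hsp]]; exists (fun i => s0`_i); split => //.
- move=> c hc hsum i hik.
  have := hi (mkseq c k) (size_mkseq _ _) _ _ i hik; rewrite nth_mkseq //; apply.
  + by move=> j hj; rewrite nth_mkseq //; apply: hc.
  + by apply: (etrans _ hsum); apply: eq_bigr => j _; rewrite nth_mkseq.
- move=> a ha; have [c [hcs hcB ->]] := hsp a ha; exists (fun i => c`_i); split => //.
Qed.

Lemma finite_of_span (A : K -> Prop) g N : (forall a, A a -> lspan g N a) ->
  finite_degree A B.
Proof.
move=> hsp; have [k [s [hA hi hs]]] := L_max hsp; exists k; exact: deg_of_fun hA hi hs.
Qed.

Lemma bound_of_span (A : K -> Prop) g N d : (forall a, A a -> lspan g N a) ->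
  has_degree A B d -> (d <= N)%N.
Proof.
move=> hsp /fun_of_deg [s [hA hi _]]; exact: L_bound hA hi hsp.
Qed.

End LinAlg.
Section Tower.
Variables (K : fieldType) (p : nat) (W : nat -> K -> Prop).
Hypothesis hp : p \in [pchar K]%R.
Hypothesis hpt : power_tower p W.

Lemma p_gt0 : (0 < p)%N. Proof. exact: prime_gt0 (pcharf_prime hp). Qed.

Lemma FrB (x y : K) : (x - y) ^+ p = x ^+ p - y ^+ p.
Proof. by rewrite -!(pFrobenius_autE hp) rmorphB. Qed.

Lemma Frsum n (a g : nat -> K) :
  (\sum_(i < n) a i * g i) ^+ p = \sum_(i < n) a i ^+ p * g i ^+ p.
Proof.
rewrite -(pFrobenius_autE hp) rmorph_sum; apply: eq_bigr => i _.
by rewrite rmorphM /= !pFrobenius_autE.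
Qed.

Lemma Wsf n : is_subfield (W n). Proof. by case: hpt. Qed.

Lemma Weqv i j : (j <= i)%N -> forall x, W j x <-> composite (W i) (Kpow p j) x.
Proof. by case: hpt => _ h; apply: h. Qed.

Lemma W0all x : W 0 x.
Proof.
apply/(Weqv (leqnn 0)) => S _ _ hK; apply: hK; exists x; by rewrite expn0 expr1.
Qed.

Lemma Kpow_sub n x : Kpow p n x -> W n x.
Proof. by move=> hx; apply/(Weqv (leqnn n)) => S _ _ hK; apply: hK. Qed.

Lemma Wdec n x : W n.+1 x -> W n x.
Proof. by move=> hx; apply/(Weqv (leqnSn n)) => S _ hW _; apply: hW. Qed.

Lemma Wfrob n x : W n x -> W n.+1 (x ^+ p).
Proof.
move=> /(Weqv (leqnSn n)) hx; apply: (hx (fun y => W n.+1 (y ^+ p))).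
- split.
  + by rewrite expr0n eqn0Ngt p_gt0 /=; apply: sf0 (Wsf _).
  + by rewrite expr1n; apply: sf1 (Wsf _).
  + by move=> a b ha hb; rewrite FrB; apply: sfB (Wsf _) _ _ ha hb.
  + by move=> a b ha hb; rewrite exprMn; apply: sfM (Wsf _) _ _ ha hb.
  + by move=> a ha; rewrite exprVn; apply: sfV (Wsf _) _ ha.
- by move=> a ha; apply: sfX (Wsf _) _ _ ha.
- move=> a [y ->]; apply: Kpow_sub; exists y; by rewrite -exprM expnSr.
Qed.

Lemma Wcomp n (S : K -> Prop) : is_subfield S -> (forall x, W n.+2 x -> S x) ->
  (forall x, Kpow p n.+1 x -> S x) -> forall x, W n.+1 x -> S x.
Proof. by move=> hS h1 h2 x /(Weqv (leqnSn n.+1)) hx; apply: hx. Qed.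

Lemma Vspan n d (s : nat -> K) : (forall i, (i < d)%N -> W n (s i)) ->
  (forall a, W n a -> lspan (W n.+1) s d a) ->
  forall a, W n.+1 a -> lspan (W n.+2) (fun i => s i ^+ p) d a.
Proof.
move=> hsW hsp.
have hB := Wsf n.+2.
set g := fun i => s i ^+ p.
set V := lspan (W n.+2) g d.
have VF : forall x, W n x -> V (x ^+ p).
  move=> x /hsp [c [hc ->]]; exists (fun i => c i ^+ p); split.
    by move=> i hi; apply: Wfrob; apply: hc.
  by rewrite Frsum.
have VD : forall x y, V x -> V y -> V (x + y).
  move=> x y [c [hc ->]] [e [he ->]]; exists (fun i => c i + e i); split.
    by move=> i hi; apply: (sfD hB); [apply: hc | apply: he].
  by rewrite -big_split; apply: eq_bigr => i _; rewrite mulrDl.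
have VN : forall x, V x -> V (- x).
  move=> x [c [hc ->]]; exists (fun i => - c i); split.
    by move=> i hi; apply: (sfN hB); apply: hc.
  by rewrite -sumrN; apply: eq_bigr => i _; rewrite mulNr.
have VZ : forall b x, W n.+2 b -> V x -> V (b * x).
  move=> b x hb [c [hc ->]]; exists (fun i => b * c i); split.
    by move=> i hi; apply: (sfM hB) => //; apply: hc.
  by rewrite mulr_sumr; apply: eq_bigr => i _; rewrite mulrA.
have V0 : V 0.
  exists (fun _ => 0); split; first by move=> i _; apply: (sf0 hB).
  by rewrite big1 // => i _; rewrite mul0r.
have Vsum : forall m (f : 'I_m -> K), (forall i, V (f i)) -> V (\sum_(i < m) f i).
  by move=> m f hf; apply: big_ind.
have V1 : V 1 by rewrite -(expr1n _ p); apply: (VF); apply: (sf1 (Wsf n)).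
have VM : forall x y, V x -> V y -> V (x * y).
  move=> x y hx hy; case: hx => c [hc ->]; rewrite mulr_suml; apply: (Vsum) => i.
  rewrite -mulrA; apply: (VZ); first by apply: hc.
  case: hy => [e [he ->]]; rewrite mulr_sumr; apply: (Vsum) => j.
  rewrite mulrCA; apply: (VZ); first by apply: he.
  by rewrite /g -exprMn; apply: (VF); apply: (sfM (Wsf n)); [apply: hsW | apply: hsW].
have VX : forall x k, V x -> V (x ^+ k).
  move=> x k hx; elim: k => [|k IH]; first by rewrite expr0.
  by rewrite exprS; apply: (VM).
have VW : forall x, V x -> W n.+1 x.
  move=> x [c [hc ->]]; apply: (sfsum (Wsf n.+1)) => i.
  apply: (sfM (Wsf n.+1)); first by apply: Wdec; apply: hc.
  by apply: Wfrob; apply: hsW.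
have VV : forall x, V x -> V x^-1.
  move=> x hx; case: (eqVneq x 0) => [->|hx0]; first by rewrite invr0.
  have -> : x^-1 = (x ^+ p)^-1 * x ^+ p.-1.
    rewrite -{1}(prednK p_gt0) exprS invfM mulfVK //; exact: expf_neq0.
  apply: (VZ); last exact: (VX).
  by apply: (sfV hB); apply: Wfrob; apply: (VW).
apply: Wcomp.
- split => //.
  + by move=> x y hx hy; apply: (VD) => //; apply: (VN).
- by move=> b hb; rewrite -(mulr1 b); apply: (VZ).
- move=> x [z ->]; rewrite expnSr exprM; apply: (VF); apply: Kpow_sub; by exists z.
Qed.

End Tower.
Theorem mainTheorem2 (K : fieldType) (p : nat) (W : nat -> K -> Prop) :
  p \in [pchar K]%R ->
  finite_degree (fun _ : K => True) (Kpow p 1) ->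
  power_tower p W ->
  (forall n, finite_degree (W n) (W n.+1)) /\
  (forall n d, has_degree (W n) (W n.+1) d -> (1 <= d)%N) /\
  (forall n d d', has_degree (W n) (W n.+1) d ->
     has_degree (W n.+1) (W n.+2) d' -> (d' <= d)%N).
Proof.
move=> hp [e he] hpt.
split; last split.
- elim=> [|n [d hd]].
    have [s [_ _ hsp]] := fun_of_deg he.
    apply: (finite_of_span (Wsf hpt 1) (g := s) (N := e)) => a _.
    have [c [hc ->]] := hsp a I; exists c; split => // i hi.
    by apply: (Kpow_sub hpt); apply: hc.
  have [s [hsW _ hsp]] := fun_of_deg hd.
  exact: (finite_of_span (Wsf hpt n.+2) (Vspan hp hpt hsW hsp)).
- move=> n [|d] hd //.
  have [s [_ _ hsp]] := fun_of_deg hd.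
  have [c [_ h1]] := hsp 1 (sf1 (Wsf hpt n)).
  by move: h1; rewrite big_ord0 => /eqP; rewrite oner_eq0.
- move=> n d d' hd hd'.
  have [s [hsW _ hsp]] := fun_of_deg hd.
  exact: (bound_of_span (Wsf hpt n.+2) (Vspan hp hpt hsW hsp) hd').
Qed.
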